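(* Let $s,t$ be positive integers with $\gcd(s,t)=1$, and define the quadratic polynomials $$A=x^2-(3s+t)(3s+2t),\qquad B=x^2-6s\,x+(3s-2t)(3s+t),\qquad C=x^2+6(s+t)\,x+(3s+2t)(3s+5t).$$ Let $P=A^{2s+t}$ and $Q=B^{s+t}C^{s}$ (both of degree $n=4s+2t$). Then $$\deg(P-Q)\le n-5.$$
   Context: This is the Davenport–Zannier pair for the ''fork'' weighted tree (two black vertices of degree $2s+t$, two white vertices of degree $s+t$, two white vertices of degree $s$); $n-5=(n+1)-(p+q)$ with $p=2$, $q=4$ is the minimal possible degree of $P-Q$. *)

(* Defs.v *)
From mathcomp Require Import all_boot all_order all_algebra.
Set Implicit Arguments. Unset Strict Implicit. Unset Printing Implicit Defensive.
Import GRing.Theory Num.Theory.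
Local Open Scope ring_scope.

Definition forkA (s t : nat) : {poly int} :=
  'X^2 - (((3 * s + t) * (3 * s + 2 * t))%N)%:R%:P.
Definition forkB (s t : nat) : {poly int} :=
  'X^2 - (6 * s)%:R *: 'X + (((3 * s)%:R - (2 * t)%:R) * ((3 * s + t)%N)%:R)%:P.
Definition forkC (s t : nat) : {poly int} :=
  'X^2 + (6 * (s + t))%:R *: 'X + (((3 * s + 2 * t) * (3 * s + 5 * t))%N)%:R%:P.

(* Main.v *)
Require Import Defs.
From mathcomp Require Import all_boot all_order all_algebra.
From mathcomp Require Import ring zify.
Import GRing.Theory Num.Theory.
Local Open Scope ring_scope.

Lemma coef_mul_top (p q : {poly int}) m k :
  (size p <= m.+1)%N -> (size q <= k.+1)%N -> (p*q)`_(m+k) = p`_m * q`_k.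
Proof.
move=> hp hq; rewrite coefM.
have hm : (m < (m+k).+1)%N by lia.
rewrite (bigD1 (Ordinal hm)) //= big1 ?addr0; first by rewrite addKn.
move=> [j hj] /= hne.
have {}hne : j != m by apply: contra hne => /eqP hjm; apply/eqP/val_inj.
case: (ltngtP j m) hne => // hjm _.
  rewrite (nth_default _ (leq_trans hq _)) ?mulr0 //; lia.
rewrite (nth_default _ (leq_trans hp _)) ?mul0r //.
Qed.

Lemma top_exp (p : {poly int}) k : (size p <= 3)%N ->
  (size (p ^+ k) <= (2*k).+1)%N /\ (p ^+ k)`_(2*k) = p`_2 ^+ k.
Proof.
move=> hp; elim: k => [|k [IHs IHc]].
  by rewrite expr0 size_poly1 coef1.
rewrite exprS; split.
  apply: (leq_trans (size_polyMleq _ _)); lia.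
have -> : (2 * k.+1 = 2 + 2 * k)%N by lia.
by rewrite coef_mul_top // IHc exprS.
Qed.

Lemma quad_props (c d : int) : let p := 'X^2 + c%:P*'X + d%:P : {poly int} in
  (size p <= 3)%N /\ p`_2 = 1.
Proof.
split; last by rewrite !coefE /= mulr0 !addr0.
apply/leq_sizeP => i hi; rewrite !coefE.
have -> : (i == 2)%N = false by apply/eqP; lia.
have -> : (i == 1)%N = false by apply/eqP; lia.
have -> : (i == 0)%N = false by apply/eqP; lia.
by rewrite /= mulr0 !addr0.
Qed.
Lemma dq (c d : int) : ('X^2 + c%:P*'X + d%:P)^`() = 2%:R*'X + c%:P.
Proof. rewrite !derivE /=. ring. Qed.
Section F. Variables s t : nat.
Let x : int := s%:R. Let y : int := t%:R.
Lemma fA : forkA s t = 'X^2 + 0%:P*'X + (-((3*x+y)*(3*x+2*y)))%:P.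
Proof. rewrite /forkA /x /y. ring. Qed.
Lemma fB : forkB s t = 'X^2 + (-(6*x))%:P*'X + ((3*x-2*y)*(3*x+y))%:P.
Proof. rewrite /forkB /x /y -mul_polyC. ring. Qed.
Lemma fC : forkC s t = 'X^2 + (6*(x+y))%:P*'X + ((3*x+2*y)*(3*x+5*y))%:P.
Proof. rewrite /forkC /x /y -mul_polyC. ring. Qed.
Definition Kc : int := -144*x*y^+5 -1080*x^+2*y^+4 - 2880*x^+3*y^+3 - 3240*x^+4*y^+2 - 1296*x^+5*y.
Lemma Kid :
  (2*s+t)%:R * (forkA s t)^`() * forkB s t * forkC s t - (s+t)%:R * forkA s t * (forkB s t)^`() * forkC s t - s%:R * forkA s t * forkB s t * (forkC s t)^`() = Kc%:P.
Proof. rewrite fA fB fC !dq /Kc /x /y. ring. Qed.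
End F.

Lemma abs (A B C k : {poly int}) (a b c : nat) :
 (a.+1)%:R*A^`()*B*C - (b.+1)%:R*A*B^`()*C - (c.+1)%:R*A*B*C^`() = k ->
 (A^+a.+1 - B^+b.+1*C^+c.+1)^`() * (B^+b.+1*C^+c.+1) - (A^+a.+1 - B^+b.+1*C^+c.+1) * (B^+b.+1*C^+c.+1)^`() = A^+a*B^+b*C^+c*k.
Proof.
move<-. rewrite !(derivB, derivM, deriv_exp) !succnK !exprS.
move: (A^`()) (B^`()) (C^`()) (A^+a) (B^+b) (C^+c) => A' B' C' Aa Bb Cc.
ring.
Qed.

Theorem mainTheorem2 (s t : nat) (hs : (0 < s)%N) (ht : (0 < t)%N)
    (hst : div.coprime s t) :
  let n := (4 * s + 2 * t)%N in
  let P := forkA s t ^+ (2 * s + t) in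
  let Q := forkB s t ^+ (s + t) * forkC s t ^+ s in
  let D : {poly int} := P - Q in (size D <= n - 4)%N.
Proof.
cbv zeta.
set A := forkA s t; set B := forkB s t; set C := forkC s t.
set n := (4 * s + 2 * t)%N; set P := A ^+ (2 * s + t); set Q := B ^+ (s + t) * C ^+ s.
set D := P - Q.
have [szA cA] : (size A <= 3)%N /\ A`_2 = 1 by rewrite /A fA; apply: quad_props.
have [szB cB] : (size B <= 3)%N /\ B`_2 = 1 by rewrite /B fB; apply: quad_props.
have [szC cC] : (size C <= 3)%N /\ C`_2 = 1 by rewrite /C fC; apply: quad_props.
have [szP cP] : (size P <= n.+1)%N /\ P`_n = 1.
  have [h1 h2] := @top_exp A (2*s+t) szA.
  have e : n = (2 * (2*s+t))%N by rewrite /n; lia.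
  by rewrite /P e; split => //; rewrite h2 cA expr1n.
have [szQ cQ] : (size Q <= n.+1)%N /\ Q`_n = 1.
  have [h1 h2] := @top_exp B (s+t) szB.
  have [h3 h4] := @top_exp C s szC.
  split.
    apply: (leq_trans (size_polyMleq _ _)); rewrite /n; lia.
  have e : n = (2 * (s+t) + 2 * s)%N by rewrite /n; lia.
  rewrite /Q e.
  by rewrite coef_mul_top // h2 h4 cB cC !expr1n mulr1.
have szD : (size D <= n)%N.
  apply/leq_sizeP => i hi; rewrite coefB.
  case: (ltngtP i n) hi => // [hin|->] _; last by rewrite cP cQ subrr.
  by rewrite !nth_default ?subrr //; apply: leq_trans hin.
set a1 := (2*s+t).-1; set b1 := (s+t).-1; set c1 := s.-1.
have Ea : (2*s+t = a1.+1)%N by rewrite /a1; lia.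
have Eb : (s+t = b1.+1)%N by rewrite /b1; lia.
have Ec : (s = c1.+1)%N by rewrite /c1; lia.
set M := A ^+ a1 * B ^+ b1 * C ^+ c1.
have hP : P = A^+a1.+1 by rewrite /P -Ea.
have hQ : Q = B^+b1.+1 * C^+c1.+1 by rewrite /Q -Eb -Ec.
have Wid : D^`() * Q - D * Q^`() = M * (Kc s t)%:P.
  have K' := Kid s t; rewrite -/A -/B -/C in K'.
  rewrite /D hP hQ /M; apply: abs.
  by rewrite -Ea -Eb -Ec.
have szM : (size (M * (Kc s t)%:P)%R <= (2 * (a1 + b1 + c1)).+1)%N.
  apply: (leq_trans (size_polyMleq _ _)).
  have h0 := size_polyC_leq1 (Kc s t).
  have hM : (size M <= (2 * (a1 + b1 + c1)).+1)%N.
    have [h1 _] := @top_exp A a1 szA.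
    have [h2 _] := @top_exp B b1 szB.
    have [h3 _] := @top_exp C c1 szC.
    have h4 := size_polyMleq (A ^+ a1) (B ^+ b1).
    have h5 := size_polyMleq (A ^+ a1 * B ^+ b1) (C ^+ c1).
    rewrite /M; lia.
  apply: leq_trans _ hM; rewrite -subn1 leq_subLR addnC leq_add2r; exact: h0.
rewrite leqNgt; apply/negP => hlt.
set E := (size D).-2.
have hsD : size D = E.+2 by rewrite /E; lia.
have lcD : D`_E.+1 != 0.
  have : lead_coef D != 0 by rewrite lead_coef_eq0 -size_poly_eq0 hsD.
  by rewrite lead_coefE hsD.
have szD' : (size D^`() <= E.+1)%N.
  apply/leq_sizeP => i hi; rewrite coef_deriv nth_default ?mul0rn //. by rewrite hsD.
have szQ' : (size Q^`() <= n.-1.+1)%N.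
  apply/leq_sizeP => i hi; rewrite coef_deriv nth_default ?mul0rn //; apply: leq_trans szQ _; rewrite /n in hi *; lia.
have hW : (D^`() * Q - D * Q^`())`_(E + n)%N != 0.
  rewrite coefB (coef_mul_top _ _ _ _ szD' szQ).
  have -> : (E + n = E.+1 + n.-1)%N by rewrite /n; lia.
  have szD2 : (size D <= E.+2)%N by rewrite hsD.
  rewrite (coef_mul_top _ _ _ _ szD2 szQ') !coef_deriv cQ.
  have -> : n.-1.+1 = n by rewrite /n; lia.
  rewrite mulr1 -mulr_natr -mulrBr mulf_neq0 // subr_eq0 cQ -[1 *+ n]/(n%:R) eqr_nat.
  apply/eqP; lia.
have : (E + n < size (M * (Kc s t)%:P)%R)%N.
  rewrite -Wid ltnNge; apply/negP => hle; move: hW; by rewrite nth_default ?eqxx.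
lia.
Qed.
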